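(* Let $n\ge 3$ and let $\mathcal{P}_E^c(D_{2n})$ be the conjugacy super enhanced power graph of the dihedral group $D_{2n}$. (i) If $n$ is odd, the Sombor spectrum of $\mathcal{P}_E^c(D_{2n})$ consists of $-(n-1)\sqrt2$ with multiplicity $n-2$, $-n\sqrt2$ with multiplicity $n-1$, and the three roots (with multiplicity) of \[x\big(x-(n-1)(n-2)\sqrt2\big)\big(x-n(n-1)\sqrt2\big)-(n-1)(5n^2-6n+2)\big(x-n(n-1)\sqrt2\big)-n(5n^2-4n+1)\big(x-(n-1)(n-2)\sqrt2\big).\] (ii) If $n$ is even, the Sombor spectrum consists of $-\tfrac n2\sqrt2$ with multiplicity $n-2$, $-(n-1)\sqrt2$ with multiplicity $n-2$, $\tfrac{n(n-2)}{4}\sqrt2$ with multiplicity $1$, and the three roots (with multiplicity) of \[x\big(x-(n-1)(n-2)\sqrt2\big)\Big(x-\tfrac{n(n-2)}{4}\sqrt2\Big)-(n-1)(5n^2-6n+2)\Big(x-\tfrac{n(n-2)}{4}\sqrt2\Big)-\tfrac n4(17n^2-16n+4)\big(x-(n-2)(n-1)\sqrt2\big).\]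
   Context: For a finite simple graph $\Gamma$ with vertices $u_1,\dots,u_N$, the Sombor matrix $S(\Gamma)$ has $(i,j)$ entry $\sqrt{\deg(u_i)^2+\deg(u_j)^2}$ if $u_i,u_j$ are adjacent and $0$ otherwise; the Sombor spectrum is the multiset of its eigenvalues. $D_{2n}=\langle a,b: a^n=b^2=e,\ ba=a^{-1}b\rangle$. The enhanced power graph $\mathcal{P}_E(G)$ has vertex set $G$, distinct vertices adjacent iff they lie in a common cyclic subgroup. The conjugacy super enhanced power graph $\mathcal{P}_E^c(G)$ has vertex set $G$, and distinct $g,h$ are adjacent iff $g,h$ are conjugate or there exist $g'$ conjugate to $g$ and $h'$ conjugate to $h$ adjacent in $\mathcal{P}_E(G)$. *)

(* Defs.v *)
From HB Require Import structures.
From mathcomp Require Import all_boot all_order all_algebra all_fingroup all_solvable.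
Set Implicit Arguments. Unset Strict Implicit. Unset Printing Implicit Defensive.
Import Order.TTheory GRing.Theory Num.Theory.
Local Open Scope ring_scope.

Definition vdeg (T : finType) (adj : rel T) (x : T) : nat := #|[set y | adj x y]|.

(* Sombor matrix of the graph (T, adj); vertices u_1..u_N are the elements of T
   listed by enum_val (the spectrum does not depend on this ordering). *)
Definition sombor_matrix (R : rcfType) (T : finType) (adj : rel T) : 'M[R]_#|T| :=
  \matrix_(i < #|T|, j < #|T|)
    (if adj (enum_val i) (enum_val j)
     then Num.sqrt (((vdeg adj (enum_val i)) ^ 2 + (vdeg adj (enum_val j)) ^ 2)%N%:R)
     else 0 : R).

Definition enh_pow_adj (gT : finGroupType) : rel gT :=
  fun x y => (x != y) && [exists z : gT, (x \in <[z]>%g) && (y \in <[z]>%g)].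

Definition conj_super_enh_adj (gT : finGroupType) : rel gT :=
  fun x y => (x != y) &&
    ((y \in (x ^: [set: gT])%g) ||
     [exists x' : gT, exists y' : gT,
        [&& x' \in (x ^: [set: gT])%g, y' \in (y ^: [set: gT])%g & enh_pow_adj x' y']]).

(* Main.v *)
Require Import Defs.
From HB Require Import structures.
From mathcomp Require Import all_boot all_order all_algebra all_fingroup all_solvable.
Import Order.TTheory GRing.Theory Num.Theory.
From mathcomp Require Import ring zify.
Set Implicit Arguments. Unset Strict Implicit. Unset Printing Implicit Defensive.

Section Gen.
Local Open Scope ring_scope.


Lemma char_poly_ev (R : comRingType) N (A : 'M[R]_N) (x : R) :
  (char_poly A).[x] = \det (x%:M - A).
Proof.
rewrite /char_poly -horner_evalE -det_map_mx /char_poly_mx map_mxB map_scalar_mx /=.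
rewrite horner_evalE hornerX; congr (\det (_ - _)); apply/matrixP=> i j.
by rewrite !mxE /= ?horner_evalE ?hornerC.
Qed.

Lemma poly_eq_ev (R : numDomainType) (p q : {poly R}) (bad : seq R) :
  (forall x, x \notin bad -> p.[x] = q.[x]) -> p = q.
Proof.
move=> h; apply/eqP; rewrite -subr_eq0; apply/eqP.
pose pr := \prod_(b <- bad) ('X - b%:P).
have prn : pr != 0 by rewrite monic_neq0 // monic_prod_XsubC.
suff : (p - q) * pr = 0 by move/eqP; rewrite mulf_eq0 (negbTE prn) orbF => /eqP.
apply: (@roots_geq_poly_eq0 _ _ [seq i%:R | i <- iota 0 (size ((p - q) * pr))]).
- apply/allP=> _ /mapP[i _ ->]; rewrite /root hornerM; apply/eqP.
  have [ib|ib] := boolP (i%:R \in bad).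
    have /rootP -> : root pr i%:R by rewrite root_prod_XsubC.
    by rewrite mulr0.

  by rewrite hornerD hornerN h // subrr mul0r.
- by rewrite map_inj_uniq ?iota_uniq // => i j /eqP; rewrite eqr_nat => /eqP.
- by rewrite size_map size_iota.
Qed.


Section Cell.
Variable R : fieldType.

Lemma sylvester N m (D Di : 'M[R]_N) (B : 'M[R]_(N, m)) (C : 'M[R]_(m, N)) :
  D *m Di = 1%:M -> \det (D - B *m C) = \det D * \det (1%:M - C *m Di *m B).
Proof.
move=> DDi.
have e1 : block_mx 1%:M B 0 1%:M *m block_mx (D - B *m C) 0 C 1%:M = block_mx D B C 1%:M.
  by rewrite mulmx_block ?mul1mx ?mul0mx ?mulmx0 ?mulmx1 ?addr0 ?add0r subrK.
have e2 : block_mx D 0 C 1%:M *m block_mx 1%:M (Di *m B) 0 (1%:M - C *m Di *m B)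
    = block_mx D B C 1%:M.
  rewrite mulmx_block ?mul1mx ?mul0mx ?mulmx0 ?mulmx1 ?addr0 ?add0r mulmxA DDi mul1mx.
  by rewrite mulmxA addrC subrK.
have := congr1 determinant e1; rewrite -e2 !det_mulmx det_ublock det_lblock det_ublock.
by rewrite det_lblock !det1 !mul1r !mulr1 => ->.
Qed.

Variables (N m : nat) (tau : 'I_N -> 'I_m) (w : 'I_m -> 'I_m -> R).

Definition cellM : 'M[R]_N :=
  \matrix_(i, j) (if i == j then 0 else w (tau i) (tau j)).

Definition ccount (l : 'I_m) : nat := #|[set i | tau i == l]|.

Lemma cell_det (xr : R) (dnz : forall k, xr + w k k != 0) :
  \det (xr%:M - cellM) =
  (\prod_(k < m) (xr + w k k) ^+ ccount k) *
  \det (1%:M - \matrix_(k, l) (w k l * (ccount l)%:R / (xr + w l l))).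
Proof.
pose d := \row_i (xr + w (tau i) (tau i)).
pose di := \row_i (xr + w (tau i) (tau i))^-1.
pose B : 'M[R]_(N, m) := \matrix_(i, k) ((tau i == k)%:R).
pose C : 'M[R]_(m, N) := \matrix_(k, j) w k (tau j).
have -> : xr%:M - cellM = diag_mx d - B *m C.
  apply/matrixP=> i j; rewrite !mxE (bigD1 (tau i)) //= big1 => [|k /negbTE kn].
    rewrite !mxE eqxx mul1r addr0; case: eqVneq => [->|_]; first by rewrite !mulr1n subr0 addrK.
    by rewrite !mulr0n.
  by rewrite !mxE eq_sym kn mul0r.
rewrite (sylvester (Di := diag_mx di)); last first.
  rewrite mulmx_diag -diag_const_mx; congr diag_mx; apply/rowP=> i; rewrite !mxE mulfV //.
congr (_ * _); last congr (determinant (_ - _)).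
  rewrite det_diag.
  rewrite (partition_big tau xpredT) //=; apply: eq_bigr => k _.
  rewrite (eq_bigr (fun=> xr + w k k)) => [|i /eqP <-]; last by rewrite mxE.
  by rewrite prodr_const /ccount cardsE.
apply/matrixP=> k l; rewrite !mxE.
rewrite (eq_bigr (fun i => if tau i == l then w k l / (xr + w l l) else 0)); last first.
  move=> i _; rewrite !mxE (bigD1 i) //= big1 => [|j /negbTE ji]; last by rewrite !mxE ji mulr0n ?mulr0 ?mul0r.
  rewrite !mxE eqxx mulr1n addr0; case: eqVneq => [<-|_]; by rewrite ?mulr1 ?mulr0.
rewrite -big_mkcond /= sumr_const /ccount cardsE -mulr_natr mulrAC.
by rewrite mul1r mulr_natr.
Qed.
End Cell.


Lemma det33 (R : comRingType) (F : nat -> nat -> R) :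
  \det (\matrix_(i < 3, j < 3) F i j) = F 0 0 * F 1 1 * F 2 2 - F 0 0 * F 1 2 * F 2 1 - F 0 1 * F 1 0 * F 2 2
         + F 0 1 * F 1 2 * F 2 0 + F 0 2 * F 1 0 * F 2 1 - F 0 2 * F 1 1 * F 2 0.
Proof.
rewrite (expand_det_row _ ord0) !big_ord_recl big_ord0 /cofactor.
rewrite !(expand_det_row _ ord0) !big_ord_recl !big_ord0 /cofactor.
rewrite !det_mx11 !mxE.
rewrite /=.
ring.
Qed.

Lemma det44 (R : comRingType) (F : nat -> nat -> R) :
  \det (\matrix_(i < 4, j < 4) F i j) = 
   F 0 0 * \det (\matrix_(i < 3, j < 3) F i.+1 (bump 0 j))
 - F 0 1 * \det (\matrix_(i < 3, j < 3) F i.+1 (bump 1 j))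
 + F 0 2 * \det (\matrix_(i < 3, j < 3) F i.+1 (bump 2 j))
 - F 0 3 * \det (\matrix_(i < 3, j < 3) F i.+1 (bump 3 j)).
Proof.
rewrite (expand_det_row _ ord0) !big_ord_recl big_ord0 /cofactor.
have m0 : forall j0 : 'I_4, row' ord0 (col' j0 (\matrix_(i < 4, j < 4) F i j)) =
    \matrix_(i < 3, j < 3) F i.+1 (bump j0 j).
  by move=> j0; apply/matrixP=> i j; rewrite !mxE.
rewrite !m0 !mxE /=.
ring.
Qed.

Lemma det_arrow (R : comRingType) (a0 a1 a2 a3 r1 r2 r3 c1 c2 c3 : R) :
  \det (\matrix_(i < 4, j < 4)
     (match nat_of_ord i, nat_of_ord j with
      | 0%N, 0%N => a0 | 0%N, 1%N => r1 | 0%N, 2%N => r2 | 0%N, 3%N => r3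
      | 1%N, 0%N => c1 | 2%N, 0%N => c2 | 3%N, 0%N => c3
      | 1%N, 1%N => a1 | 2%N, 2%N => a2 | 3%N, 3%N => a3 | _, _ => 0 end) : 'M[R]_4)
  = a0 * a1 * a2 * a3 - r1 * c1 * a2 * a3 - r2 * c2 * a1 * a3 - r3 * c3 * a1 * a2.
Proof.
set G := (fun i j : nat => match i, j with
      | 0%N, 0%N => a0 | 0%N, 1%N => r1 | 0%N, 2%N => r2 | 0%N, 3%N => r3
      | 1%N, 0%N => c1 | 2%N, 0%N => c2 | 3%N, 0%N => c3
      | 1%N, 1%N => a1 | 2%N, 2%N => a2 | 3%N, 3%N => a3 | _, _ => 0 end).
rewrite (det44 G) (det33 (fun i j => G i.+1 (bump 0 j))) (det33 (fun i j => G i.+1 (bump 1 j))).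
rewrite (det33 (fun i j => G i.+1 (bump 2 j))) (det33 (fun i j => G i.+1 (bump 3 j))) /G /=.
ring.
Qed.

Lemma det_arrowF (R : comRingType) (F : nat -> nat -> R) :
  F 1%N 2%N = 0 -> F 1%N 3%N = 0 -> F 2%N 1%N = 0 -> F 2%N 3%N = 0 -> F 3%N 1%N = 0 -> F 3%N 2%N = 0 ->
  \det (1%:M - \matrix_(k < 4, l < 4) F k l : 'M[R]_4) =
  (1 - F 0%N 0%N) * (1 - F 1%N 1%N) * (1 - F 2%N 2%N) * (1 - F 3%N 3%N)
  - F 0%N 1%N * F 1%N 0%N * (1 - F 2%N 2%N) * (1 - F 3%N 3%N)
  - F 0%N 2%N * F 2%N 0%N * (1 - F 1%N 1%N) * (1 - F 3%N 3%N)
  - F 0%N 3%N * F 3%N 0%N * (1 - F 1%N 1%N) * (1 - F 2%N 2%N).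
Proof.
move=> h12 h13 h21 h23 h31 h32.
have -> : 1%:M - \matrix_(k < 4, l < 4) F k l = \matrix_(i < 4, j < 4)
     (match nat_of_ord i, nat_of_ord j with
      | 0%N, 0%N => 1 - F 0%N 0%N | 0%N, 1%N => - F 0%N 1%N | 0%N, 2%N => - F 0%N 2%N
      | 0%N, 3%N => - F 0%N 3%N
      | 1%N, 0%N => - F 1%N 0%N | 2%N, 0%N => - F 2%N 0%N | 3%N, 0%N => - F 3%N 0%N
      | 1%N, 1%N => 1 - F 1%N 1%N | 2%N, 2%N => 1 - F 2%N 2%N | 3%N, 3%N => 1 - F 3%N 3%N
      | _, _ => 0 end).
  apply/matrixP=> i j; rewrite !mxE.
  case: i j => [[|[|[|[|i]]]] Hi] [[|[|[|[|j]]]] Hj] //=;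
    by rewrite ?mulr1n ?mulr0n ?sub0r ?subr0 ?h12 ?h13 ?h21 ?h23 ?h31 ?h32 ?oppr0.
rewrite det_arrow; ring.
Qed.

End Gen.

Section Dih.
Local Open Scope group_scope.
Variable gT : finGroupType.
Variables (n : nat) (x y : gT).
Hypotheses (hn : (2 < n)%N) (gen : <[x]> <*> <[y]> = [set: gT])
  (xn : x ^+ n = 1) (y2 : y ^+ 2 = 1) (xy : x ^ y = x^-1)
  (cardT : #|[set: gT]| = (2 * n)%N).

Lemma yinv : y^-1 = y.
Proof. by apply/eqP; rewrite eq_invg_mul -{2}(expg1 y) -expgS y2. Qed.

Lemma yy : y * y = 1.
Proof. by rewrite -{2}(expg1 y) -expgS y2. Qed.

Lemma conj_rot a : a \in <[x]> -> a ^ y = a^-1.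
Proof. by case/cycleP=> i ->; rewrite conjXg xy expVgn. Qed.

Lemma normT : [set: gT] \subset 'N(<[x]>).
Proof.
rewrite -gen join_subG !cycle_subG; apply/andP; split.
  by rewrite (subsetP (normG _)) // cycle_id.
by rewrite inE -cycleJ xy cycleV subxx.
Qed.

Lemma rotJ a c : (a ^ c \in <[x]>) = (a \in <[x]>).
Proof. by rewrite memJ_norm // (subsetP normT) ?inE. Qed.

Lemma mulT : <[x]> * <[y]> = [set: gT].
Proof.
by rewrite -norm_joinEr ?gen // cycle_subG (subsetP normT) ?inE.
Qed.

Lemma orders : #[x] = n /\ #[y] = 2.
Proof.
have := mul_cardG <[x]> <[y]>; rewrite mulT cardT.
have : #[x] %| n by rewrite order_dvdn xn.
have : #[y] %| 2 by rewrite order_dvdn y2.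
have := order_gt0 x; have := order_gt0 y.
rewrite -!orderE.
move=> h1 h2 /dvdn_leq - /(_ isT) h4 /dvdn_leq - /(_ (ltnW (ltnW hn))) h5 e.
have h3 : (0 < #|<[x]>%G :&: <[y]>%G|)%N by apply/card_gt0P; exists 1; rewrite group1.
move: e h3; set k := #|_ :&: _| => e h3.
split; nia.
Qed.

Lemma y_notin : y \notin <[x]>.
Proof.
apply/negP=> yx; have := mul_cardG <[x]> <[y]>; rewrite mulT cardT.
have -> : <[x]> :&: <[y]> = <[y]> by apply/setIidPr; rewrite cycle_subG.
case: orders => h1 h2; rewrite -!orderE h1 h2; nia.
Qed.

Lemma cover g : g \notin <[x]> -> g * y \in <[x]>.
Proof.
have : g \in <[x]> * <[y]> by rewrite mulT inE.
case/mulsgP=> a b ax /cycleP[i ->] ->.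
rewrite -(expg_mod i y2) modn2; case: (odd i) => /=.
  by rewrite expg1 -mulgA yy mulg1.
by rewrite expg0 mulg1 ax.
Qed.

Lemma refl_sq a : a \in <[x]> -> (a * y) ^+ 2 = 1.
Proof.
move=> ax; rewrite expgS expg1 -mulgA (mulgA y) -{1}yinv.
by rewrite -mulgA -conjgE conj_rot // mulgV.
Qed.

Lemma refl_sq' z : z \notin <[x]> -> z ^+ 2 = 1.
Proof.
move=> zx; have := refl_sq (cover zx).
by rewrite -mulgA yy mulg1.
Qed.

Lemma cyc_refl z u : z \notin <[x]> -> u \in <[z]> -> u = 1 \/ u = z.
Proof.
move=> zx /cycleP[i ->]; rewrite -(expg_mod i (refl_sq' zx)) modn2.
by case: (odd i); [right; rewrite expg1 | left; rewrite expg0].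
Qed.

Lemma enh_refl (u v : gT) : enh_pow_adj u v -> v \notin <[x]> -> u = 1.
Proof.
case/andP=> neq /existsP[z /andP[uz vz]] vx.
have [zx|zx] := boolP (z \in <[x]>).
  by move: vx; rewrite (subsetP _ _ vz) // cycle_subG.
case: (cyc_refl zx vz) => ev; first by move: vx; rewrite ev group1.
case: (cyc_refl zx uz) => // eu; by move: neq; rewrite eu ev eqxx.
Qed.

Lemma enh_sym (u v : gT) : enh_pow_adj u v = enh_pow_adj v u.
Proof.
rewrite /enh_pow_adj eq_sym; congr (_ && _); apply: eq_existsb => z; exact: andbC.
Qed.

Lemma comm_rot a b : a \in <[x]> -> b \in <[x]> -> commute a b.
Proof. by case/cycleP=> i -> /cycleP[j ->]; apply: commuteX2. Qed.

Lemma y_rot d : d \in <[x]> -> y * d = d^-1 * y.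
Proof.
by move=> dx; rewrite -(conj_rot dx) conjgE yinv -!mulgA yy mulg1.
Qed.

Lemma conjA a d : a \in <[x]> -> d \in <[x]> -> (a * y) ^ d = a * d^-1 * d^-1 * y.
Proof.
move=> ax dx; rewrite conjgE -!mulgA y_rot // !mulgA; congr (_ * _ * _).
by apply: comm_rot; rewrite ?groupV.
Qed.

Lemma conjB e : e \in <[x]> -> (e * y) ^ y = e^-1 * y.
Proof. by move=> ex; rewrite conjgE yinv -!mulgA yy mulg1 y_rot. Qed.

Lemma sq_in e : e \in <[x]> -> e * e \in <[x ^+ 2]>.
Proof.
case/cycleP=> i ->; rewrite -expgD addnn -mul2n expgM; exact: mem_cycle.
Qed.

Lemma x2_sub : <[x ^+ 2]> \subset <[x]>.
Proof. exact: cycleX. Qed.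

Lemma par e : e \in <[x]> -> e \in <[x ^+ 2]> \/ e * x^-1 \in <[x ^+ 2]>.
Proof.
case/cycleP=> i ->; rewrite (divn_eq i 2) modn2.
case: (odd i) => /=; [right | left].
  by rewrite addn1 expgSr mulgK mulnC expgM mem_cycle.
by rewrite addn0 mulnC expgM mem_cycle.
Qed.

Lemma refl_conj0 a b : a \in <[x]> -> b \in <[x]> ->
  (b * y \in (a * y) ^: [set: gT]) = ((a \in <[x ^+ 2]>) == (b \in <[x ^+ 2]>)).
Proof.
move=> ax bx; apply/idP/idP.
  case/imsetP=> c _ hc; have [cx|cx] := boolP (c \in <[x]>).
    move: hc; rewrite conjA // => /mulIg ->.
    by rewrite -mulgA (groupMr _ (sq_in (groupVr cx))).
  have cyx := cover cx; have ec : c = (c * y) * y by rewrite -mulgA yy mulg1.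
  move: hc; rewrite ec conjgM conjA // conjB; last by rewrite !groupM ?groupV.
  move=> /mulIg ->; rewrite groupV -mulgA.
  by rewrite (groupMr _ (sq_in (groupVr cyx))).
move=> /eqP e.
have ab : a^-1 * b \in <[x ^+ 2]>.
  have [a2|a2] := boolP (a \in <[x ^+ 2]>).
    by rewrite groupMl ?groupV // -e.
  have [b2|b2] := boolP (b \in <[x ^+ 2]>); first by move: e; rewrite b2 (negbTE a2).
  case: (par ax) => [a2in|a2']; first by rewrite a2in in a2.
  case: (par bx) => [b2in|b2']; first by rewrite b2in in b2.
  have := groupM (groupVr a2') b2'.
  have -> : (a * x^-1)^-1 * (b * x^-1) = a^-1 * b; last by [].
  by rewrite invMg invgK !mulgA -(mulgA x) (comm_rot (cycle_id x) (groupM (groupVr ax) bx)) mulgK.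
case/cycleP: ab => k ek.
apply/imsetP; exists (x ^+ k)^-1; rewrite ?inE //.
rewrite conjA ?groupV ?mem_cycle // !invgK -(mulgA a) -expgD addnn -mul2n expgM -ek.
by rewrite mulKVg.
Qed.

Lemma refl_conj g h : g \notin <[x]> -> h \notin <[x]> ->
  (h \in g ^: [set: gT]) = ((g * y \in <[x ^+ 2]>) == (h * y \in <[x ^+ 2]>)).
Proof.
move=> gx hx; rewrite -refl_conj0 ?cover // -!mulgA yy !mulg1 //.
Qed.

Lemma conj_one g : (g \in 1 ^: [set: gT]) = (g == 1).
Proof. by rewrite class1G inE. Qed.


Definition tn (g : gT) : nat :=
  (if g == 1%g then 0 else if g \in <[x]> then 1 else if (g * y)%g \in <[x ^+ 2]>%g then 2 else 3)%N.

Definition Ab (k l : nat) : bool := ((k == 0) || (l == 0) || (k == l))%N.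

Lemma classE g h : (h \in g ^: [set: gT]) = [exists c, h == g ^ c].
Proof.
apply/imsetP/existsP=> [[c _ ->]|[c /eqP ->]]; first by exists c.
by exists c; rewrite ?inE.
Qed.

Lemma adj_right g h x' y' : g != h -> x' \in g ^: [set: gT] -> y' \in h ^: [set: gT] ->
  enh_pow_adj x' y' -> conj_super_enh_adj g h.
Proof.
move=> gh xg yh e; rewrite /conj_super_enh_adj gh /=; apply/orP; right.
by apply/existsP; exists x'; apply/existsP; exists y'; rewrite xg yh e.
Qed.

Lemma enh_cyc (u v z : gT) : u != v -> u \in <[z]> -> v \in <[z]> -> enh_pow_adj u v.
Proof. by move=> uv uz vz; rewrite /enh_pow_adj uv; apply/existsP; exists z; rewrite uz vz. Qed.

Lemma adjE g h : g != h -> conj_super_enh_adj g h = Ab (tn g) (tn h).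
Proof.
move=> gh; rewrite /Ab /tn.
have [g1|g1] := eqVneq g 1.
  subst g; apply: (adj_right (x' := 1) (y' := h)) => //; try exact: class_refl.
  by apply: (enh_cyc (z := h)) => //; rewrite ?group1 ?cycle_id.
have [h1|h1] := eqVneq h 1.
  subst h; rewrite orbT; apply: (adj_right (x' := g) (y' := 1)) => //; try exact: class_refl.
  by apply: (enh_cyc (z := g)) => //; rewrite ?group1 ?cycle_id // eq_sym.
have [gx|gx] := boolP (g \in <[x]>); have [hx|hx] := boolP (h \in <[x]>) => /=.
- apply: (adj_right (x' := g) (y' := h)) => //; try exact: class_refl.
  exact: (enh_cyc (z := x)).
- suff -> : conj_super_enh_adj g h = false by case: ifP.
  apply/negbTE; rewrite /conj_super_enh_adj negb_and negb_or; apply/orP; right.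
  apply/andP; split.
    by rewrite classE; apply/existsP => -[c /eqP hc]; move: hx; rewrite hc rotJ gx.
  apply/existsP => -[x1 /existsP [y1 /and3P [xg yh e]]].
  move: xg yh; rewrite !classE => /existsP[c /eqP xc] /existsP[d /eqP yd].
  have : y1 \notin <[x]> by rewrite yd rotJ.
  move/(enh_refl e) => x11; move: g1; rewrite -(conjg_eq1 g c) -xc x11 eqxx //.
- suff -> : conj_super_enh_adj g h = false by case: ifP.
  apply/negbTE; rewrite /conj_super_enh_adj negb_and negb_or; apply/orP; right;
  (apply/andP; split;
    [by rewrite classE; apply/existsP => -[c /eqP hc]; move: hx; rewrite hc rotJ (negbTE gx)|]);
  (apply/existsP => -[x1 /existsP [y1 /and3P [xg yh e]]];
  move: xg yh; rewrite !classE => /existsP[c /eqP xc] /existsP[d /eqP yd];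
  have : x1 \notin <[x]> by rewrite xc rotJ);
  rewrite enh_sym in e; move/(enh_refl e) => y11; move: h1; rewrite -(conjg_eq1 h d) -yd y11 eqxx //.
- have -> : conj_super_enh_adj g h = (h \in g ^: [set: gT]).
    rewrite /conj_super_enh_adj gh /=; case: (h \in _) => //=.
    apply/negbTE/existsP => -[x1 /existsP [y1 /and3P [xg yh e]]].
    move: xg yh; rewrite !classE => /existsP[c /eqP xc] /existsP[d /eqP yd].
    have : y1 \notin <[x]> by rewrite yd rotJ.
    move/(enh_refl e) => x11; move: g1; rewrite -(conjg_eq1 g c) -xc x11 eqxx //.
  rewrite refl_conj //.
  by case: (g * y \in _); case: (h * y \in _).
Qed.

Lemma tn_lt4 g : (tn g < 4)%N.
Proof. by rewrite /tn; repeat case: ifP. Qed.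

Lemma x2y_notin g : g * y \in <[x ^+ 2]> -> g \notin <[x]>.
Proof.
move=> gy; apply/negP=> gx; have := (subsetP x2_sub _ gy).
by rewrite groupMl // (negbTE y_notin).
Qed.

Lemma tn0 g : (tn g == 0%N) = (g == 1).
Proof. by rewrite /tn; case: (eqVneq g 1) => //= gn; repeat case: ifP. Qed.

Lemma tn1 g : (tn g == 1%N) = (g \in <[x]>) && (g != 1).
Proof. by rewrite /tn; case: (eqVneq g 1) => //= gn; rewrite ?andbF ?andbT; repeat case: ifP. Qed.

Lemma tn2 g : (tn g == 2%N) = (g * y \in <[x ^+ 2]>).
Proof.
rewrite /tn; case: (eqVneq g 1) => [->|_]; first by rewrite mul1g; apply/esym/negbTE/negP => /(subsetP x2_sub); apply/negP/y_notin.
case: ifP => [gx|_]; last by case: ifP.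
by apply/esym/negbTE/negP => /x2y_notin; rewrite gx.
Qed.

Lemma tn3 g : (tn g == 3%N) = (g \notin <[x]>) && (g * y \notin <[x ^+ 2]>).
Proof.
rewrite /tn; case: (eqVneq g 1) => [->|_]; first by rewrite group1.
by case: ifP => //= _; case: ifP.
Qed.

Definition c2 := #|<[x ^+ 2]>|.

Lemma card_x : #|<[x]>| = n.
Proof. by rewrite -orderE; case: orders. Qed.

Lemma c2_le : (c2 <= n)%N.
Proof. by rewrite -card_x subset_leq_card // x2_sub. Qed.

Lemma cnt0 : #|[set g | tn g == 0%N]| = 1%N.
Proof. have -> : [set g | tn g == 0%N] = [set 1] by apply/setP=> g; rewrite !inE tn0. by rewrite cards1. Qed.

Lemma cnt1 : #|[set g | tn g == 1%N]| = (n - 1)%N.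
Proof.
have -> : [set g | tn g == 1%N] = <[x]> :\ 1.
  by apply/setP=> g; rewrite !inE tn1 andbC.
have := cardsD1 1 <[x]>; rewrite group1 card_x => ->; by rewrite add1n subn1.
Qed.

Lemma S2E : [set g | tn g == 2%N] = <[x ^+ 2]> :* y.
Proof. by apply/setP=> g; rewrite !inE tn2 mem_rcoset yinv. Qed.

Lemma cnt2 : #|[set g | tn g == 2%N]| = c2.
Proof. by rewrite S2E card_rcoset. Qed.

Lemma cnt3 : #|[set g | tn g == 3%N]| = (n - c2)%N.
Proof.
have -> : [set g | tn g == 3%N] = ~: (<[x]> :|: <[x ^+ 2]> :* y).
  by apply/setP=> g; rewrite !inE tn3 mem_rcoset yinv negb_or.
have := cardsC (<[x]> :|: <[x ^+ 2]> :* y); rewrite -cardsT cardT.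
have := cardsU <[x]> (<[x ^+ 2]> :* y).
have -> : <[x]> :&: <[x ^+ 2]> :* y = set0.
  apply/setP=> g; rewrite !inE mem_rcoset yinv; apply/negbTE; rewrite negb_and.
  by case: (boolP (g * y \in <[x ^+ 2]>)) => [/x2y_notin -> | _]; rewrite ?orbT.
rewrite cards0 subn0 card_rcoset card_x -/c2 => ->.
set k := #|~: _|. have := c2_le. lia.
Qed.

Definition delta (k : nat) : nat :=
  match k with 0 => (2 * n - 1) | 1 => (n - 1) | 2 => c2 | _ => (n - c2) end%N.

Lemma cardAb k : (0 < k < 4)%N -> #|[set h | Ab k (tn h)]| = (1 + #|[set h | tn h == k]|)%N.
Proof.
move=> /andP[k0 k4].
have -> : [set h | Ab k (tn h)] = [set h | tn h == 0%N] :|: [set h | tn h == k].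
  by apply/setP=> h; rewrite !inE /Ab (gtn_eqF k0) /= [k == _]eq_sym.
rewrite cardsU cnt0.
have -> : [set h | tn h == 0%N] :&: [set h | tn h == k] = set0.
  apply/setP=> h; rewrite !inE; case: eqP => //= ->; by rewrite eq_sym (gtn_eqF k0).
by rewrite cards0 subn0.
Qed.

Lemma vdegE g : vdeg (@conj_super_enh_adj gT) g = delta (tn g).
Proof.
rewrite /vdeg.
have -> : [set h | conj_super_enh_adj g h] = [set h | Ab (tn g) (tn h)] :\ g.
  apply/setP=> h; rewrite !inE; case: eqVneq => [->|hg] /=.
    by rewrite /conj_super_enh_adj eqxx.
  by rewrite adjE // eq_sym.
have gin : g \in [set h | Ab (tn g) (tn h)] by rewrite inE /Ab eqxx !orbT.
have := cardsD1 g [set h | Ab (tn g) (tn h)]; rewrite gin add1n.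
have := tn_lt4 g; rewrite /delta.
case E : (tn g) => [|[|[|[|k]]]] // _ e.
- have eT : [set h | Ab 0 (tn h)] = setT by apply/setP=> h; rewrite !inE.
  by rewrite eT cardT in e; rewrite e subn1.
- by rewrite cardAb // cnt1 add1n in e; case: e.
- by rewrite cardAb // cnt2 add1n in e; case: e.
- by rewrite cardAb // cnt3 add1n in e; case: e.
Qed.

Section Real.
Variable R : rcfType.
Local Open Scope ring_scope.

Definition wf (k l : nat) : R :=
  if (k == 0%N) && (l == 0%N) then 0
  else if Ab k l then Num.sqrt (((delta k) ^ 2 + (delta l) ^ 2)%N%:R) else 0.

Definition tau' (i : 'I_#|gT|) : 'I_4 := inord (tn (enum_val i)).

Lemma S_cell : sombor_matrix R (@conj_super_enh_adj gT) = cellM tau' (fun k l : 'I_4 => wf k l).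
Proof.
apply/matrixP=> i j; rewrite !mxE.
case: eqVneq => [<-|ij]; first by rewrite /conj_super_enh_adj eqxx.
have gh : enum_val i != enum_val j by rewrite (inj_eq enum_val_inj).
rewrite adjE // !vdegE /wf /tau' !inordK ?tn_lt4 //.
case: (boolP ((tn (enum_val i) == 0%N) && (tn (enum_val j) == 0%N))) => [/andP[]|//].
rewrite !tn0 => /eqP e1 /eqP e2.
by move: gh; rewrite e1 e2 eqxx.
Qed.

Definition cnt (l : nat) : nat := #|[set g | tn g == l]|.

Lemma ccountE (l : 'I_4) : ccount tau' l = cnt l.
Proof.
rewrite /ccount /cnt -(card_imset _ enum_val_inj).
apply: eq_card => g; rewrite inE; apply/imsetP/idP => [[i]|e].
  by rewrite inE /tau' -val_eqE /= inordK ?tn_lt4 // => ? ->.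
exists (enum_rank g); rewrite ?enum_rankK // inE /tau' -val_eqE /= enum_rankK inordK ?tn_lt4 //.
Qed.

Lemma eval_main (xr : R) : (forall k : 'I_4, xr + wf k k != 0) ->
  (char_poly (sombor_matrix R (@conj_super_enh_adj gT))).[xr] =
  (\prod_(k < 4) (xr + wf k k) ^+ cnt k) *
  \det (1%:M - \matrix_(k < 4, l < 4) (wf k l * (cnt l)%:R / (xr + wf l l))).
Proof.
move=> hd; rewrite char_poly_ev S_cell cell_det //; congr (_ * _).
  by apply: eq_bigr => k _; rewrite ccountE.
congr (\det (_ - _)); apply/matrixP=> k l; rewrite !mxE ccountE //.
Qed.

Lemma c2E : c2 = (n %/ gcdn n 2)%N.
Proof. by rewrite /c2 -orderE orderXgcd; case: orders => -> _. Qed.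

Lemma c2_odd : odd n -> c2 = n.
Proof. by move=> o; rewrite c2E; move: o; rewrite -coprimen2 => /eqP ->; rewrite divn1. Qed.

Lemma c2_even : ~~ odd n -> (2 * c2)%N = n.
Proof.
move=> o; rewrite c2E; move: o; rewrite -dvdn2 => d.
by rewrite (gcdn_idPr d) mulnC divnK.
Qed.

Lemma sq2 (a : nat) : Num.sqrt ((a ^ 2 + a ^ 2)%N%:R : R) = a%:R * Num.sqrt 2.
Proof.
rewrite addnn -mul2n natrM natrX mulrC sqrtrM ?exprn_ge0 ?ler0n // sqrtr_sqr.
by rewrite ger0_norm ?ler0n.
Qed.

Lemma sqrt_prod (a b : nat) : Num.sqrt ((a + b)%N%:R : R) * Num.sqrt ((b + a)%N%:R) = (a + b)%N%:R.
Proof. by rewrite addnC -expr2 sqr_sqrtr ?ler0n. Qed.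

Definition Fm (xr : R) (k l : nat) : R := wf k l * (cnt l)%:R / (xr + wf l l).

Lemma eval_arrow (xr : R) : (forall k : 'I_4, xr + wf k k != 0) ->
  (char_poly (sombor_matrix R (@conj_super_enh_adj gT))).[xr] =
  (xr + wf 0 0) ^+ cnt 0 * ((xr + wf 1 1) ^+ cnt 1 * ((xr + wf 2 2) ^+ cnt 2 * (xr + wf 3 3) ^+ cnt 3)) *
  ((1 - Fm xr 0 0) * (1 - Fm xr 1 1) * (1 - Fm xr 2 2) * (1 - Fm xr 3 3)
  - Fm xr 0 1 * Fm xr 1 0 * (1 - Fm xr 2 2) * (1 - Fm xr 3 3)
  - Fm xr 0 2 * Fm xr 2 0 * (1 - Fm xr 1 1) * (1 - Fm xr 3 3)
  - Fm xr 0 3 * Fm xr 3 0 * (1 - Fm xr 1 1) * (1 - Fm xr 2 2)).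
Proof.
move=> hd; rewrite eval_main // !big_ord_recl big_ord0 mulr1.
rewrite (det_arrowF (F := Fm xr)); [reflexivity|..]; by rewrite /Fm /wf /= !mul0r.
Qed.

Lemma Fm_prod (xr : R) k : (0 < k)%N -> (k < 4)%N -> Fm xr 0 k * Fm xr k 0 =
  ((delta 0) ^ 2 + (delta k) ^ 2)%N%:R * ((cnt k)%:R * (cnt 0)%:R / ((xr + wf k k) * (xr + wf 0 0))).
Proof.
have pf : forall a b c c0 d d0 : R, a * c / d * (b * c0 / d0) = (a * b) * (c * c0 / (d * d0)).
  by move=> *; rewrite invfM; ring.
by case: k => [|[|[|[|k]]]] // _ _; rewrite /Fm /wf /= pf sqrt_prod.
Qed.

Lemma final_odd : odd n ->
  let s2 : R := Num.sqrt 2 in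
  let nr : R := n%:R in
  char_poly (sombor_matrix R (@conj_super_enh_adj gT)) =
     ('X + ((nr - 1) * s2)%:P) ^+ (n - 2)
     * ('X + (nr * s2)%:P) ^+ (n - 1)
     * ('X * ('X - ((nr - 1) * (nr - 2) * s2)%:P) * ('X - (nr * (nr - 1) * s2)%:P)
        - ((nr - 1) * (5 * nr ^+ 2 - 6 * nr + 2))%:P * ('X - (nr * (nr - 1) * s2)%:P)
        - (nr * (5 * nr ^+ 2 - 4 * nr + 1))%:P * ('X - ((nr - 1) * (nr - 2) * s2)%:P)).
Proof.
move=> o s2 nr.
apply: (poly_eq_ev (bad := [:: -wf 0 0; -wf 1 1; -wf 2 2; -wf 3 3])) => xr hb.
have hd : forall k : 'I_4, xr + wf k k != 0.
  move=> [[|[|[|[|k]]]] Hk] //=; rewrite addr_eq0; apply: contraNneq hb => ->;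
    by rewrite !inE eqxx ?orbT.
have hd0 := hd 0; have hd1 := hd 1; have hd2 := hd 2; have hd3 := hd 3.
rewrite eval_arrow // !Fm_prod //.
rewrite !(hornerE, hornerM).
rewrite /Fm /cnt cnt0 cnt1 cnt2 cnt3 (c2_odd o) subnn.
have cb : ((n - 1)%N%:R : R) = n%:R - 1 by rewrite natrB //; lia.
have ca : ((2 * n - 1)%N%:R : R) = 2 * n%:R - 1 by rewrite natrB ?natrM //; lia.
move: hd0 hd1 hd2 hd3; rewrite /wf /= (c2_odd o) subnn !sq2 cb => hd0 hd1 hd2 hd3.
rewrite /nr /s2 !natrD !natrX ca cb.
have P1e : forall a : R, a ^+ (n - 1) = a ^+ (n - 2) * a by move=> a; rewrite -exprSr; congr (_ ^+ _); lia.
have P2e : forall a : R, a ^+ n = a ^+ (n - 1) * a by move=> a; rewrite -exprSr; congr (_ ^+ _); lia.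
rewrite P2e (P1e (xr + (n%:R - 1) * Num.sqrt 2)).
rewrite addr0 in hd0.
field.
by rewrite hd0 hd1 hd2.
Qed.

Lemma final_even : ~~ odd n ->
  let s2 : R := Num.sqrt 2 in
  let nr : R := n%:R in
  char_poly (sombor_matrix R (@conj_super_enh_adj gT)) =
     ('X + (nr / 2 * s2)%:P) ^+ (n - 2)
     * ('X + ((nr - 1) * s2)%:P) ^+ (n - 2)
     * ('X - (nr * (nr - 2) / 4 * s2)%:P)
     * ('X * ('X - ((nr - 1) * (nr - 2) * s2)%:P) * ('X - (nr * (nr - 2) / 4 * s2)%:P)
        - ((nr - 1) * (5 * nr ^+ 2 - 6 * nr + 2))%:P * ('X - (nr * (nr - 2) / 4 * s2)%:P)
        - (nr / 4 * (17 * nr ^+ 2 - 16 * nr + 4))%:P * ('X - ((nr - 2) * (nr - 1) * s2)%:P)).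
Proof.
move=> o s2 nr.
have e2 := c2_even o.
have e3 : (n - c2 = c2)%N by lia.
apply: (poly_eq_ev (bad := [:: -wf 0 0; -wf 1 1; -wf 2 2; -wf 3 3])) => xr hb.
have hd : forall k : 'I_4, xr + wf k k != 0.
  move=> [[|[|[|[|k]]]] Hk] //=; rewrite addr_eq0; apply: contraNneq hb => ->;
    by rewrite !inE eqxx ?orbT.
have hd0 := hd 0; have hd1 := hd 1; have hd2 := hd 2; have hd3 := hd 3.
rewrite eval_arrow // !Fm_prod //.
rewrite !(hornerE, hornerM).
rewrite /Fm /cnt cnt0 cnt1 cnt2 cnt3 e3.
have cb : ((n - 1)%N%:R : R) = n%:R - 1 by rewrite natrB //; lia.
have ca : ((2 * n - 1)%N%:R : R) = 2 * n%:R - 1 by rewrite natrB ?natrM //; lia.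
move: hd0 hd1 hd2 hd3; rewrite /wf /= e3 !sq2 cb => hd0 hd1 hd2 hd3.
rewrite /nr /s2 !natrD !natrX ca cb.
have ehalf : (n%:R / 2 : R) = c2%:R by rewrite -e2 natrM (mulrC 2%:R) mulfK ?pnatr_eq0.
rewrite ehalf.
have P1e : forall a : R, a ^+ (n - 1) = a ^+ (n - 2) * a by move=> a; rewrite -exprSr; congr (_ ^+ _); lia.
have Qe : forall a : R, a ^+ (n - 2) = a ^+ (c2 - 1) * a ^+ (c2 - 1).
  by move=> a; rewrite -exprD; congr (_ ^+ _); lia.
have Se : forall a : R, a ^+ c2 = a ^+ (c2 - 1) * a.
  by move=> a; rewrite -exprSr; congr (_ ^+ _); lia.
rewrite (P1e (xr + (n%:R - 1) * Num.sqrt 2)) (Qe (xr + c2%:R * Num.sqrt 2)) Se.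
have en : (n%:R : R) = 2 * c2%:R by rewrite -e2 natrM.
rewrite en; rewrite en in hd1.
rewrite addr0 in hd0.
field.
by rewrite hd0 hd1 hd2.
Qed.

End Real.
End Dih.

Lemma gens n : (2 < n)%N -> exists x y : 'D_(2*n),
  [/\ <[x]> <*> <[y]> = [set: 'D_(2*n)], x ^+ n = 1, y ^+ 2 = 1 & x ^ y = x^-1]%g.
Proof.
move=> hn.
have h1 : (1 < n)%N by apply: ltnW.
have := isoGrp_hom (Grp_dihedral h1).
rewrite -mul2n.
case/existsP=> -[x y] /=.
rewrite !xpair_eqE /= => /and4P [/eqP a /eqP b /eqP c /eqP d].
by exists x, y.
Qed.

Local Open Scope ring_scope.
Unset Implicit Arguments.
Set Strict Implicit.

Theorem corollary5p6 (R : rcfType) (n : nat) (hn : (3 <= n)%N) :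
  let s2 : R := Num.sqrt 2 in
  let nr : R := n%:R in
  let S := sombor_matrix R (@conj_super_enh_adj 'D_(2 * n)) in
  (odd n ->
   char_poly S =
     ('X + ((nr - 1) * s2)%:P) ^+ (n - 2)
     * ('X + (nr * s2)%:P) ^+ (n - 1)
     * ('X * ('X - ((nr - 1) * (nr - 2) * s2)%:P) * ('X - (nr * (nr - 1) * s2)%:P)
        - ((nr - 1) * (5 * nr ^+ 2 - 6 * nr + 2))%:P * ('X - (nr * (nr - 1) * s2)%:P)
        - (nr * (5 * nr ^+ 2 - 4 * nr + 1))%:P * ('X - ((nr - 1) * (nr - 2) * s2)%:P)))
  /\
  (~~ odd n ->
   char_poly S =
     ('X + (nr / 2 * s2)%:P) ^+ (n - 2)
     * ('X + ((nr - 1) * s2)%:P) ^+ (n - 2)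
     * ('X - (nr * (nr - 2) / 4 * s2)%:P)
     * ('X * ('X - ((nr - 1) * (nr - 2) * s2)%:P) * ('X - (nr * (nr - 2) / 4 * s2)%:P)
        - ((nr - 1) * (5 * nr ^+ 2 - 6 * nr + 2))%:P * ('X - (nr * (nr - 2) / 4 * s2)%:P)
        - (nr / 4 * (17 * nr ^+ 2 - 16 * nr + 4))%:P * ('X - ((nr - 2) * (nr - 1) * s2)%:P))).
Proof.
move=> s2 nr S.
have h1 : (1 < n)%N by apply: ltnW.
have [x [y [gen xn y2 xy]]] := gens hn.
have cardT : #|[set: 'D_(2 * n)]| = (2 * n)%N.
  by have := card_dihedral h1; rewrite -mul2n.
split=> o.
  exact: (final_odd hn gen xn y2 xy cardT R o).
exact: (final_even hn gen xn y2 xy cardT R o).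
Qed.
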